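(* Let $b\in\mathcal E_1$ with $b-1$ flat at $0$, let $\theta$ be the inverse germ of $t\mapsto t\,b(t)$, write $\theta(x)=x\,c(x)$, and let $\sigma(x)=\theta(x)^4$, $\sigma^n$ its $n$-th iterate ($\sigma^0=\mathrm{id}$). Then the product $\Big(\prod_{n=0}^{\infty}c(\sigma^n(x))^{1/4^n}\Big)^{1/2}$ converges uniformly on some neighbourhood of $0$.
   Context: $\mathcal E_1$ denotes the ring of smooth function germs at $0\in\mathbb R$. A germ is flat at $0$ if all its derivatives (including its value) vanish at $0$. *)

(* Defs.v *)
From Stdlib Require Import Reals.
From Coquelicot Require Import Coquelicot.
Open Scope R_scope.

(* f is C^infinity on an open neighbourhood of a (a representative of a germ in E_1). *)
Definition smooth_near (f : R -> R) (a : R) : Prop :=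
  exists eps, 0 < eps /\ forall (n : nat) (x : R), Rabs (x - a) < eps -> ex_derive_n f n x.

Definition flat_at (f : R -> R) (a : R) : Prop :=
  forall n : nat, Derive_n f n a = 0.

Fixpoint partial_prod (u : nat -> R) (N : nat) : R :=
  match N with
  | O => 1
  | S N' => partial_prod u N' * u N'
  end.

Definition unif_cvg_on (U : R -> Prop) (f : nat -> R -> R) (g : R -> R) : Prop :=
  forall eps, 0 < eps -> exists N0 : nat, forall (N : nat) (x : R),
    (N0 <= N)%nat -> U x -> Rabs (f N x - g x) < eps.

(* Main.v *)
Require Import Defs.
From Stdlib Require Import Reals Lra Lia.
From Coquelicot Require Import Coquelicot.
Open Scope R_scope.

Fixpoint psum (a : nat -> R) (N : nat) : R :=
  match N with O => 0 | S N' => psum a N' + a N' end.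

Lemma geom4 : is_series (fun n => (/4)^n) (4/3).
Proof.
  replace (4/3) with (/ (1 - /4)) by field.
  apply is_series_geom. rewrite Rabs_pos_eq; lra.
Qed.

Lemma ex_dom (M : R) (a : nat -> R) :
  (forall n, Rabs (a n) <= M * (/4)^n) -> ex_series (fun n => Rabs (a n)).
Proof.
  intros H. apply (@ex_series_le R_AbsRing R_CompleteNormedModule _ (fun n => M * (/4)^n)).
  - intros n. unfold norm; simpl. change (Rabs (Rabs (a n)) <= M * (/4)^n).
    rewrite Rabs_Rabsolu. apply H.
  - apply (ex_series_ext (fun n => scal M ((/4)^n))).
    + intros n. reflexivity.
    + apply (@ex_series_scal_l R_AbsRing R_NormedModule). exists (4/3). apply geom4.
Qed.

Lemma Series_geomM (M : R) : Series (fun n => M * (/4)^n) = M * (4/3).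
Proof. rewrite Series_scal_l. f_equal. apply is_series_unique, geom4. Qed.

Lemma Series_split (a : nat -> R) (M : R) :
  (forall n, Rabs (a n) <= M * (/4)^n) ->
  forall N, Series a = psum a N + Series (fun k => a (N + k)%nat).
Proof.
  intros H N. induction N as [|N IH].
  - simpl. rewrite Rplus_0_l. apply Series_ext. intros; reflexivity.
  - rewrite IH. simpl. rewrite Series_incr_1.
    + rewrite Rplus_assoc. f_equal. f_equal. rewrite Nat.add_0_r. reflexivity.
      apply Series_ext. intros k. f_equal. lia.
    + apply ex_series_Rabs. apply (ex_dom (M * (/4)^N)). intros k.
      rewrite Rmult_assoc, <- pow_add. apply H.
Qed.

Lemma tail_bound (a : nat -> R) (M : R) :
  (forall n, Rabs (a n) <= M * (/4)^n) ->
  forall N, Rabs (psum a N - Series a) <= M * (/4)^N * (4/3).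
Proof.
  intros H N. rewrite (Series_split a M H N).
  replace (psum a N - (psum a N + Series (fun k => a (N + k)%nat)))
    with (- Series (fun k => a (N + k)%nat)) by ring.
  rewrite Rabs_Ropp.
  assert (H2 : forall k, Rabs (a (N+k)%nat) <= (M * (/4)^N) * (/4)^k).
  { intros k. rewrite Rmult_assoc, <- pow_add. apply H. }
  eapply Rle_trans. apply Series_Rabs. apply (ex_dom _ _ H2).
  rewrite <- Series_geomM. apply Series_le.
  - intros n. split. apply Rabs_pos. apply H2.
  - apply (ex_series_ext (fun n => scal (M * (/4)^N) ((/4)^n))).
    + intros n. reflexivity.
    + apply (@ex_series_scal_l R_AbsRing R_NormedModule). exists (4/3). apply geom4.
Qed.

Lemma exp_lip (u v B : R) : Rabs u <= B -> Rabs v <= B ->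
  Rabs (exp u - exp v) <= exp B * Rabs (u - v).
Proof.
  assert (K : forall u v, u <= v -> v <= B -> exp v - exp u <= exp B * (v - u)).
  { intros x y Hxy HyB.
    assert (E : exp (x - y) >= 1 + (x - y)).
    { destruct (Req_dec (x - y) 0) as [e|e]. rewrite e, exp_0. lra.
      left. apply exp_ineq1. exact e. }
    assert (Ex : exp x = exp y * exp (x - y)).
    { rewrite <- exp_plus. f_equal. ring. }
    assert (exp y <= exp B). { destruct (Req_dec y B) as [->|n]. lra. left; apply exp_increasing; lra. }
    assert (0 < exp y) by apply exp_pos.
    rewrite Ex. nra. }
  intros Hu Hv. apply Rabs_le_between in Hu. apply Rabs_le_between in Hv.
  destruct (Rle_dec u v) as [h|h].
  - rewrite Rabs_minus_sym, (Rabs_minus_sym u v).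
    assert (exp u <= exp v). { destruct (Req_dec u v) as [->|n]. lra. left; apply exp_increasing; lra. }
    rewrite !Rabs_pos_eq by lra. apply K; lra.
  - assert (exp v <= exp u). { left; apply exp_increasing; lra. }
    rewrite !Rabs_pos_eq by lra. apply K; lra.
Qed.

Lemma pow4_le1 (N : nat) : (/4)^N <= 1.
Proof. induction N; simpl. lra. assert (0 <= (/4)^N) by (apply pow_le; lra). nra. Qed.

Lemma unif_exp (U : R -> Prop) (a : R -> nat -> R) (M k : R) :
  0 <= M -> 0 <= k -> (forall x n, U x -> Rabs (a x n) <= M * (/4)^n) ->
  unif_cvg_on U (fun N x => exp (k * psum (a x) N)) (fun x => exp (k * Series (a x))).
Proof.
  intros HM Hk H eps Heps.
  set (B := k * (M * (8/3))).
  set (C := exp B * k * M * (4/3)).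
  assert (HC : 0 <= C). { unfold C. pose proof (exp_pos B). apply Rmult_le_pos; [|lra].
    apply Rmult_le_pos; [|lra]. apply Rmult_le_pos; lra. }
  destruct (pow_lt_1_zero (/4)) with (y := eps / (C + 1)) as [N0 HN0].
  { rewrite Rabs_pos_eq; lra. }
  { apply Rdiv_lt_0_compat; lra. }
  exists N0. intros N x HN Ux.
  pose proof (tail_bound (a x) M (fun n => H x n Ux)) as T.
  pose proof (T 0%nat) as T0. simpl in T0.
  pose proof (T N) as TN. specialize (HN0 N HN).
  assert (Hq : 0 <= (/4)^N). { apply pow_le. lra. }
  rewrite Rabs_pos_eq in HN0 by exact Hq.
  assert (HqL : (/4)^N <= 1). { apply pow4_le1. }
  set (s := Series (a x)) in *. set (p := psum (a x) N) in *.
  rewrite Rminus_0_l, Rabs_Ropp in T0.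
  assert (Hs : Rabs s <= M * (8/3)) by lra.
  assert (Hp : Rabs p <= M * (8/3)).
  { replace p with ((p - s) + s) by ring. eapply Rle_trans. apply Rabs_triang. nra. }
  eapply Rle_lt_trans. apply (exp_lip _ _ B).
  - unfold B. rewrite Rabs_mult, (Rabs_pos_eq k) by lra. apply Rmult_le_compat_l; lra.
  - unfold B. rewrite Rabs_mult, (Rabs_pos_eq k) by lra. apply Rmult_le_compat_l; lra.
  - replace (k * p - k * s) with (k * (p - s)) by ring.
    rewrite Rabs_mult, (Rabs_pos_eq k) by lra.
    assert (Hd : Rabs (p - s) * k <= k * M * (/4)^N * (4/3)).
    { rewrite Rmult_comm. replace (k * M * (/4)^N * (4/3)) with (k * (M * (/4)^N * (4/3))) by ring.
      apply Rmult_le_compat_l; lra. }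
    assert (HE : 0 < exp B) by apply exp_pos.
    assert (exp B * (k * Rabs (p - s)) <= C * (/4)^N).
    { unfold C. rewrite (Rmult_comm k). nra. }
    assert (C * (/4)^N < eps).
    { assert (HNN : (/4)^N * (C+1) < eps).
      { apply (Rmult_lt_compat_r (C+1)) in HN0; [|lra].
        unfold Rdiv in HN0. rewrite Rmult_assoc, Rinv_l in HN0 by lra. lra. }
      nra. }
    lra.
Qed.

Lemma cont_eps (f : R -> R) (x : R) : ex_derive f x ->
  forall eps, 0 < eps -> exists d, 0 < d /\ forall y, Rabs (y - x) < d -> Rabs (f y - f x) < eps.
Proof.
  intros H eps Heps.
  assert (Hc : continuity_pt f x).
  { apply continuity_pt_filterlim. apply (ex_derive_continuous f x H). }
  rewrite continuity_pt_locally in Hc.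
  destruct (Hc (mkposreal eps Heps)) as [d Hd].
  exists d. split. apply cond_pos. intros y Hy. apply (Hd y). exact Hy.
Qed.

Lemma unif_ext (U : R -> Prop) (f g : nat -> R -> R) (h : R -> R) :
  (forall N x, U x -> f N x = g N x) -> unif_cvg_on U g h -> unif_cvg_on U f h.
Proof.
  intros E H eps Heps. destruct (H eps Heps) as [N0 HN0]. exists N0.
  intros N x HN Ux. rewrite E by exact Ux. apply HN0; assumption.
Qed.

Theorem lemma3p9 (b theta c : R -> R) :
  smooth_near b 0 ->
  flat_at (fun t => b t - 1) 0 ->
  (* theta is the inverse germ of t |-> t * b t *)
  (exists r, 0 < r /\
     (forall t, Rabs t < r -> theta (t * b t) = t) /\
     (forall x, Rabs x < r -> theta x * b (theta x) = x)) ->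
  (* theta x = x * c x with c in E_1 *)
  smooth_near c 0 ->
  (exists r, 0 < r /\ forall x, Rabs x < r -> theta x = x * c x) ->
  let sigma := fun x => (theta x) ^ 4 in
  let term := fun (x : R) (n : nat) => Rpower (c (Nat.iter n sigma x)) (/ 4 ^ n) in
  exists delta, 0 < delta /\
    exists P F : R -> R,
      unif_cvg_on (fun x => Rabs x < delta) (fun N x => partial_prod (term x) N) P /\
      unif_cvg_on (fun x => Rabs x < delta) (fun N x => sqrt (partial_prod (term x) N)) F.
Proof.
  intros [eb [Heb Hb]] Hflat [ri [Hri [_ Hinv]]] [ec [Hec Hc]] [rc [Hrc Htc]] sigma term.
  assert (b0 : b 0 = 1). { pose proof (Hflat 0%nat) as H. simpl in H. lra. }
  assert (bd : ex_derive b 0).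
  { pose proof (Hb 1%nat 0) as H. apply H. rewrite Rminus_0_r, Rabs_R0. exact Heb. }
  assert (cd : ex_derive c 0).
  { pose proof (Hc 1%nat 0) as H. apply H. rewrite Rminus_0_r, Rabs_R0. exact Hec. }
  destruct (cont_eps b 0 bd (1/2)) as [eta [Heta Hbeta]]; [lra|].
  destruct (cont_eps c 0 cd (1/6)) as [r1 [Hr1 Hc1]]; [lra|].
  set (K := Rabs (c 0) + 1).
  assert (HK : 1 <= K) by (unfold K; pose proof (Rabs_pos (c 0)); lra).
  assert (HcK : forall y, Rabs y < r1 -> Rabs (c y) <= K).
  { intros y Hy. specialize (Hc1 y). rewrite Rminus_0_r in Hc1. specialize (Hc1 Hy).
    unfold K. pose proof (Rabs_triang_inv (c y) (c 0)). lra. }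
  set (rho0 := Rmin (Rmin ri rc) (Rmin r1 (eta / K))).
  assert (Hr0 : 0 < rho0).
  { unfold rho0. repeat apply Rmin_pos; try lra. apply Rdiv_lt_0_compat; lra. }
  assert (Hr0a : rho0 <= ri /\ rho0 <= rc /\ rho0 <= r1 /\ rho0 <= eta / K).
  { unfold rho0. repeat split.
    - eapply Rle_trans; apply Rmin_l.
    - eapply Rle_trans; [apply Rmin_l|apply Rmin_r].
    - eapply Rle_trans; [apply Rmin_r|apply Rmin_l].
    - eapply Rle_trans; apply Rmin_r. }
  destruct Hr0a as [Ha1 [Ha2 [Ha3 Ha4]]].
  assert (Cl1 : forall y, y <> 0 -> Rabs y < rho0 -> 2/3 < c y).
  { intros y Hy0 Hy.
    assert (Ht : theta y = y * c y) by (apply Htc; lra).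
    assert (Hth : Rabs (theta y) < eta).
    { rewrite Ht, Rabs_mult. assert (Rabs (c y) <= K) by (apply HcK; lra).
      assert (Rabs y * K < eta).
      { apply (Rmult_lt_compat_r K) in Hy; [|lra]. unfold Rdiv in Ha4.
        assert (rho0 * K <= eta).
        { apply (Rmult_le_compat_r K) in Ha4; [|lra]. rewrite Rmult_assoc, Rinv_l in Ha4; lra. }
        lra. }
      pose proof (Rabs_pos y). nra. }
    specialize (Hbeta (theta y)). rewrite Rminus_0_r, b0 in Hbeta. specialize (Hbeta Hth).
    apply Rabs_lt_between in Hbeta.
    pose proof (Hinv y ltac:(lra)) as Hi. rewrite Ht in Hi.
    assert (E : c y * b (theta y) = 1).
    { apply (Rmult_eq_reg_l y); [|exact Hy0]. rewrite <- Ht in Hi. rewrite Ht in Hi |- *. lra. }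
    nra. }
  assert (Cl2 : 1/2 < c 0).
  { assert (Hy : Rabs (rho0 / 2) < rho0) by (rewrite Rabs_pos_eq; lra).
    pose proof (Cl1 (rho0/2) ltac:(lra) Hy).
    specialize (Hc1 (rho0/2)). rewrite Rminus_0_r in Hc1. specialize (Hc1 ltac:(lra)).
    apply Rabs_lt_between in Hc1. lra. }
  assert (Cl : forall y, Rabs y < rho0 -> 1/2 < c y <= K).
  { intros y Hy. split.
    - destruct (Req_dec y 0) as [->|n]. lra. pose proof (Cl1 y n Hy). lra.
    - pose proof (HcK y ltac:(lra)). pose proof (Rle_abs (c y)). lra. }
  set (rho := Rmin rho0 (Rmin 1 (/ (K * K)))).
  assert (Hrho : 0 < rho).
  { unfold rho. repeat apply Rmin_pos; try lra. apply Rinv_0_lt_compat. nra. }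
  assert (Hrb : rho <= rho0 /\ rho <= 1 /\ rho <= / (K * K)).
  { unfold rho. repeat split. apply Rmin_l.
    - eapply Rle_trans; [apply Rmin_r|apply Rmin_l].
    - eapply Rle_trans; apply Rmin_r. }
  destruct Hrb as [Hb1 [Hb2 Hb3]].
  assert (Hsig : forall y, Rabs y < rho -> Rabs (sigma y) < rho).
  { intros y Hy. unfold sigma. rewrite Htc by lra.
    rewrite <- RPow_abs, Rabs_mult.
    set (u := Rabs y). set (v := Rabs (c y)).
    assert (Hu1 : u < rho) by exact Hy.
    assert (Hv : 0 <= v <= K).
    { split. apply Rabs_pos. apply HcK. lra. }
    assert (Hu : 0 <= u) by apply Rabs_pos.
    assert (HuK : u * (K * K) < 1).
    { apply (Rmult_lt_compat_r (K*K)) in Hy; [|nra].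
      assert (rho * (K*K) <= 1).
      { apply (Rmult_le_compat_r (K*K)) in Hb3; [|nra]. rewrite Rinv_l in Hb3; nra. }
      fold u in Hy. lra. }
    assert (Hw : u * v * v < 1).
    { assert (v * v <= K * K) by nra. nra. }
    assert (Hw0 : 0 <= u * v * v) by (apply Rmult_le_pos; [apply Rmult_le_pos|]; lra).
    assert ((u * v) ^ 4 = u * u * ((u * v * v) * (u * v * v))) by ring.
    rewrite H.
    assert ((u * v * v) * (u * v * v) <= 1) by nra.
    assert (u * u <= u) by nra.
    assert (0 <= u * u) by nra.
    nra. }
  assert (Hit : forall n x, Rabs x < rho -> Rabs (Nat.iter n sigma x) < rho).
  { intros n x Hx. induction n as [|n IH]; simpl. exact Hx. apply Hsig. exact IH. }
  set (M := ln 2 + ln K).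
  assert (Hln : forall z, 1/2 < z <= K -> Rabs (ln z) <= M).
  { intros z Hz. unfold M.
    assert (ln z <= ln K) by (apply ln_le; lra).
    assert (ln (/2) < ln z) by (apply ln_increasing; lra).
    rewrite ln_Rinv in H0 by lra.
    assert (0 <= ln K) by (rewrite <- ln_1; apply ln_le; lra).
    assert (0 < ln 2) by (rewrite <- ln_1; apply ln_increasing; lra).
    apply Rabs_le. lra. }
  set (a := fun x n => / 4 ^ n * ln (c (Nat.iter n sigma x))).
  assert (Ha : forall x n, Rabs x < rho -> Rabs (a x n) <= M * (/4)^n).
  { intros x n Hx. unfold a. rewrite Rabs_mult, <- pow_inv.
    rewrite (Rabs_pos_eq ((/4)^n)) by (apply pow_le; lra).
    rewrite Rmult_comm. apply Rmult_le_compat_r. apply pow_le; lra.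
    apply Hln. apply Cl. pose proof (Hit n x Hx). lra. }
  assert (HM : 0 <= M).
  { unfold M. assert (0 <= ln K) by (rewrite <- ln_1; apply ln_le; lra).
    assert (0 < ln 2) by (rewrite <- ln_1; apply ln_increasing; lra). lra. }
  assert (Hpp : forall x N, partial_prod (term x) N = exp (1 * psum (a x) N)).
  { intros x N. induction N as [|N IH]; simpl.
    - rewrite Rmult_0_r, exp_0. reflexivity.
    - rewrite IH. unfold term, Rpower. rewrite <- exp_plus. f_equal. unfold a. ring. }
  exists rho. split. exact Hrho.
  exists (fun x => exp (1 * Series (a x))), (fun x => exp (/2 * Series (a x))).
  split.
  - apply (unif_ext _ _ (fun N x => exp (1 * psum (a x) N))).
    + intros N x _. apply Hpp.
    + apply (unif_exp _ _ M); [exact HM|lra|]. intros x n Hx. apply Ha. exact Hx.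
  - apply (unif_ext _ _ (fun N x => exp (/2 * psum (a x) N))).
    + intros N x _. rewrite Hpp.
      replace (1 * psum (a x) N) with (/2 * psum (a x) N + /2 * psum (a x) N) by field.
      rewrite exp_plus. apply sqrt_square. left; apply exp_pos.
    + apply (unif_exp _ _ M); [exact HM|lra|]. intros x n Hx. apply Ha. exact Hx.
Qed.
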